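(* Let $a,b\in GF(q)\setminus\{0\}$ and let $\mu\in GF(q)$ satisfy $\mu^2=\frac ba\neq1$. For every point $P\in\mathcal B_a$ there are exactly two circles $g,h\in\tau(a,b)$ that are tangential to $\mathcal B_a$ in $P$. Moreover, $g$ is tangential to $\mathcal B_b$ in $\mu P$ and $h$ is tangential to $\mathcal B_b$ in $-\mu P$.
   Context: Let $p$ be an odd prime, $m\ge1$, and $q=p^m$. $GF(q^2)$ denotes the quadratic extension of $GF(q)$, and for $z\in GF(q^2)$ we write $\bar z:=z^{q}$. The Miquelian Möbius plane $\mathbb M(q)$ has point set $GF(q^2)\cup\{\infty\}$ and circles of two types: for $s\in GF(q^2)$ and $c\in GF(q)\setminus\{0\}$, the circle of the first type $\mathcal B^1_{(s,c)}=\{z\in GF(q^2):(z-s)(\bar z-\bar s)=c\}$; for $s\in GF(q^2)\setminus\{0\}$ and $c\in GF(q)$, the circle of the second type $\mathcal B^2_{(s,c)}=\{z\in GF(q^2):\bar s z+s\bar z=c\}\cup\{\infty\}$. Two circles are called tangential if they have exactly one point in common; a circle $g$ is tangential to a circle $\mathcal B$ in $P$ if $g\cap\mathcal B=\{P\}$. For $a\in GF(q)\setminus\{0\}$ put $\mathcal B_a:=\mathcal B^1_{(0,a)}$, and for $a,b\in GF(q)\setminus\{0\}$ let $\tau(a,b)$ be the set of circles tangential to both $\mathcal B_a$ and $\mathcal B_b$. *)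

(* Defs.v *)
(* GF(q^2) is modelled as an arbitrary finite field L with
   #|L| = q^2, q = p^m; conjugation is z |-> z^q and GF(q) is its fixed field. *)
From HB Require Import structures.
From mathcomp Require Import all_boot all_order all_algebra all_field.
Set Implicit Arguments. Unset Strict Implicit. Unset Printing Implicit Defensive.
Import GRing.Theory.
Local Open Scope ring_scope.

Section Moebius.
Variable (L : finFieldType) (q : nat).

Definition conjq (z : L) : L := z ^+ q.

Definition inGFq (x : L) : bool := x ^+ q == x.

(* points of M(q): Some z for z in GF(q^2), None for infinity *)
Definition circle1 (s c : L) : {set option L} :=
  [set x | if x is Some z then (z - s) * conjq (z - s) == c else false].

Definition circle2 (s c : L) : {set option L} :=
  [set x | if x is Some z then conjq s * z + s * conjq z == c else true].

Definition is_circle (C : {set option L}) : Prop :=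
  (exists s c, [/\ inGFq c, c != 0 & C = circle1 s c]) \/
  (exists s c, [/\ s != 0, inGFq c & C = circle2 s c]).

Definition tangential_in (g B : {set option L}) (P : option L) : Prop :=
  g :&: B = [set P].

Definition tangential (g B : {set option L}) : Prop :=
  exists P, tangential_in g B P.

Definition Bc (a : L) : {set option L} := circle1 0 a.

Definition in_tau (a b : L) (g : {set option L}) : Prop :=
  [/\ is_circle g, tangential g (Bc a) & tangential g (Bc b)].

Definition scalept (mu : L) (P : option L) : option L := omap (fun z => mu * z) P.

End Moebius.

(* Main.v *)
Require Import Defs.
From HB Require Import structures.
From mathcomp Require Import all_boot all_order all_algebra all_field.
From mathcomp Require Import ring.
Import GRing.Theory.
Local Open Scope ring_scope.

Lemma conjM (L : finFieldType) q (x y : L) : conjq q (x * y) = conjq q x * conjq q y.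
Proof. exact: exprMn. Qed.
Lemma conjV (L : finFieldType) q (x : L) : conjq q (x^-1) = (conjq q x)^-1.
Proof. exact: exprVn. Qed.
Lemma conj1 (L : finFieldType) q : conjq q (1 : L) = 1.
Proof. exact: expr1n. Qed.
Lemma conjdiv (L : finFieldType) q (x y : L) : conjq q (x / y) = conjq q x / conjq q y.
Proof. by rewrite conjM conjV. Qed.

Section X.
End X.

Lemma conj0 (L : finFieldType) q
  (hD : forall x y : L, conjq q (x + y) = conjq q x + conjq q y) : conjq q (0 : L) = 0.
Proof.
have := hD 0 0; rewrite addr0 -{1}[conjq q 0]addr0 => /addrI.
by move=> <-.
Qed.
Lemma conjN (L : finFieldType) q
  (hD : forall x y : L, conjq q (x + y) = conjq q x + conjq q y) (x : L) :
  conjq q (- x) = - conjq q x.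
Proof.
have := hD x (-x); rewrite subrr conj0 // => /eqP.
by rewrite eq_sym addr_eq0 => /eqP ->; rewrite opprK.
Qed.
Lemma conjB (L : finFieldType) q
  (hD : forall x y : L, conjq q (x + y) = conjq q x + conjq q y) (x y : L) :
  conjq q (x - y) = conjq q x - conjq q y.
Proof. by rewrite hD conjN. Qed.
Lemma conj2 (L : finFieldType) q
  (hD : forall x y : L, conjq q (x + y) = conjq q x + conjq q y) :
  conjq q (2 : L) = 2.
Proof. by rewrite -[2 : L]/(1 *+ 2) mulr2n hD conj1. Qed.

Lemma key (L : fieldType) (w cw d : L) : w + cw = d + d -> w * cw = d * d -> w = d.
Proof.
move=> h1 h2.
have : (w - d) * (w - d) = 0.
  have -> : (w - d) * (w - d) = w * w - (d + d) * w + d * d by ring.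
  rewrite -h1 -h2; ring.
by move/eqP; rewrite mulf_eq0 orbb subr_eq0 => /eqP.
Qed.

Lemma sqrt_cases (L : fieldType) (w k : L) : w * w = k * k -> w = k \/ w = - k.
Proof.
move=> h.
have : (w - k) * (w + k) = 0.
  have -> : (w - k) * (w + k) = w * w - k * k by ring.
  by rewrite h subrr.
move/eqP; rewrite mulf_eq0 subr_eq0 addr_eq0 => /orP[] /eqP; tauto.
Qed.

Lemma tang_elim (T : finType) (k B : {set T}) P : k :&: B = [set P] ->
  [/\ P \in k, P \in B & forall x, x \in k -> x \in B -> x = P].
Proof.
move=> H.
have : P \in k :&: B by rewrite H set11.
rewrite inE => /andP[h1 h2]; split=> // x xk xB.
have : x \in k :&: B by rewrite inE xk xB.
by rewrite H inE => /eqP.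
Qed.

Lemma mem_c1 (L : finFieldType) q (s c z : L) :
  (Some z \in circle1 q s c) = ((z - s) * conjq q (z - s) == c).
Proof. by rewrite /circle1 inE. Qed.
Lemma mem_c1N (L : finFieldType) q (s c : L) : (None \in circle1 q s c) = false.
Proof. by rewrite /circle1 inE. Qed.
Lemma mem_c2 (L : finFieldType) q (s c z : L) :
  (Some z \in circle2 q s c) = (conjq q s * z + s * conjq q z == c).
Proof. by rewrite /circle2 inE. Qed.
Lemma mem_Bc (L : finFieldType) q (a z : L) :
  (Some z \in Bc q a) = (z * conjq q z == a).
Proof. by rewrite /Bc /circle1 inE subr0. Qed.
Lemma mem_BcN (L : finFieldType) q (a : L) : (None \in Bc q a) = false.
Proof. by rewrite /Bc /circle1 inE. Qed.
Lemma meet1 (L : finFieldType) q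
  (hD : forall x y : L, conjq q (x + y) = conjq q x + conjq q y)
  (hK : forall x : L, conjq q (conjq q x) = x)
  (z0 a t k e : L) :
  z0 * conjq q z0 = a -> a != 0 -> conjq q t = t -> conjq q k = k -> t != 0 ->
  e = k * k * a -> (1 - t) * (1 - t) = (k - t) * (k - t) ->
  circle1 q (t * z0) ((1 - t) ^+ 2 * a) :&: Bc q e = [set Some (k * z0)].
Proof.
move=> hz0 ha ht hk t0 he hkt.
have cz0 : conjq q z0 != 0.
  by apply: contraNneq ha => h; rewrite -hz0 h mulr0.
apply/setP => [[z|]]; last by rewrite inE mem_c1N in_set1.
rewrite inE mem_c1 mem_Bc inE.
apply/andP/eqP.
- case=> /eqP h1 /eqP h2; congr Some.
  rewrite conjB // conjM ht in h1.
  set W := z * conjq q z0 + conjq q z * z0.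
  have E : (z - t * z0) * (conjq q z - t * conjq q z0)
      = z * conjq q z - t * W + t^+2 * (z0 * conjq q z0) by rewrite /W; ring.
  rewrite E h2 hz0 he [(1 - t) ^+ 2]expr2 hkt in h1.
  have hW : t * W = t * (k * a + k * a).
    have -> : t * W = k * k * a + t^+2 * a - (k * k * a - t * W + t ^+ 2 * a) by ring.
    rewrite h1; ring.
  have {}hW := mulfI t0 hW.
  have hw : z * conjq q z0 = k * a.
    apply: (@key _ _ (conjq q z * z0)); first by rewrite -hW.
    have -> : z * conjq q z0 * (conjq q z * z0) = (z * conjq q z) * (z0 * conjq q z0) by ring.
    rewrite h2 hz0 he; ring.
  apply: (mulIf cz0); rewrite hw -hz0; ring.
- case=> ->; split; apply/eqP.
  + rewrite conjB // !conjM hk ht.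
    have -> : (k * z0 - t * z0) * (k * conjq q z0 - t * conjq q z0)
       = (k - t) * (k - t) * (z0 * conjq q z0) by ring.
    by rewrite hz0 -hkt expr2.
  + rewrite conjM hk.
    have -> : k * z0 * (k * conjq q z0) = k * k * (z0 * conjq q z0) by ring.
    by rewrite hz0 he.
Qed.

Lemma tau_lemma (L : finFieldType) q
  (hD : forall x y : L, conjq q (x + y) = conjq q x + conjq q y)
  (hK : forall x : L, conjq q (conjq q x) = x) (s z0 a : L) :
  z0 * conjq q z0 = a -> a != 0 -> s * conjq q z0 = z0 * conjq q s ->
  conjq q (s * conjq q z0 / a) = s * conjq q z0 / a /\ s = (s * conjq q z0 / a) * z0.
Proof.
move=> hz0 ha hs.
have ca : conjq q a = a by rewrite -hz0 conjM hK mulrC.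
split.
- by rewrite conjdiv conjM hK ca hs [conjq q s * _]mulrC.
- have -> : s * conjq q z0 / a * z0 = s * (z0 * conjq q z0) / a by ring.
  by rewrite hz0 mulfK.
Qed.

Lemma sigma_fix (L : finFieldType) q
  (hD : forall x y : L, conjq q (x + y) = conjq q x + conjq q y)
  (hK : forall x : L, conjq q (conjq q x) = x) (z0 z a mu : L) :
  z0 * conjq q z0 = a -> a != 0 -> z * conjq q z = mu * mu * a ->
  z0 * conjq q z = z * conjq q z0 -> z = mu * z0 \/ z = - mu * z0.
Proof.
move=> hz0 ha hz hs.
have cz0 : conjq q z0 != 0.
  by apply: contraNneq ha => h; rewrite -hz0 h mulr0.
have hw : (z * conjq q z0) * (z * conjq q z0) = (mu * a) * (mu * a).
  have -> : (z * conjq q z0) * (z * conjq q z0) = (z * conjq q z0) * (z0 * conjq q z).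
    by rewrite hs.
  have -> : (z * conjq q z0) * (z0 * conjq q z) = (z * conjq q z) * (z0 * conjq q z0).
    by ring.
  rewrite hz hz0; ring.
case: (@sqrt_cases _ _ _ hw) => h; [left|right]; apply: (mulIf cz0); rewrite h -hz0; ring.
Qed.
Ltac fieldt := field; repeat (apply/andP; split).

Lemma inGFqE (L : finFieldType) q (x : L) : inGFq q x = (conjq q x == x).
Proof. by []. Qed.

Lemma solve_t (L : fieldType) (k t : L) : (k - t) * (k - t) = (1 - t) * (1 - t) ->
  k != 1 -> (2 : L) != 0 -> t = (1 + k) / 2.
Proof.
move=> H k1 h2.
have : (k - 1) * (k + 1 - 2 * t) = 0.
  have -> : (k - 1) * (k + 1 - 2 * t) = (k - t) * (k - t) - (1 - t) * (1 - t) by ring.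
  by rewrite H subrr.
move/eqP; rewrite mulf_eq0 subr_eq0 (negbTE k1) /= subr_eq0 => /eqP e.
apply: (mulfI h2); rewrite [2 * (_ / _)]mulrC divfK // -e; ring.
Qed.

Lemma main_abs (L : finFieldType) q
  (hD : forall x y : L, conjq q (x + y) = conjq q x + conjq q y)
  (hK : forall x : L, conjq q (conjq q x) = x) (h2 : (2 : L) != 0)
  (a b mu : L) (ha : inGFq q a) (ha0 : a != 0) (hb : inGFq q b) (hb0 : b != 0)
  (hmu : inGFq q mu) (hmu2 : mu ^+ 2 = b / a) (hba : b / a != 1)
  (P : option L) (hP : P \in Bc q a) :
  exists g h : {set option L}, [/\ g != h, in_tau q a b g /\ in_tau q a b h,
        tangential_in g (Bc q a) P /\ tangential_in h (Bc q a) P,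
        (forall k, in_tau q a b k -> tangential_in k (Bc q a) P -> k = g \/ k = h)
      & tangential_in g (Bc q b) (scalept mu P) /\
        tangential_in h (Bc q b) (scalept (- mu) P)].
Proof.
case: P hP => [z0|]; last by rewrite mem_BcN.
rewrite mem_Bc => /eqP hz0.
have ca : conjq q a = a by apply/eqP.
have cmu : conjq q mu = mu by apply/eqP.
have hb' : b = mu * mu * a by rewrite -expr2 hmu2 divfK.
have hmu1 : mu != 1 by apply: contraNneq hba => e; rewrite -hmu2 e expr1n.
have hmum1 : mu != -1 by apply: contraNneq hba => e; rewrite -hmu2 e expr2 mulrNN mulr1.
have mu0 : mu != 0 by apply: contraNneq hb0 => e; rewrite hb' e !mul0r.
have z0n : z0 != 0 by apply: contraNneq ha0 => e; rewrite -hz0 e mul0r.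
have cz0n : conjq q z0 != 0 by apply: contraNneq ha0 => e; rewrite -hz0 e mulr0.
pose tg := (1 + mu) / 2; pose th := (1 - mu) / 2.
have ctg : conjq q tg = tg by rewrite /tg conjdiv hD conj1 cmu conj2.
have cth : conjq q th = th by rewrite /th conjdiv conjB // conj1 cmu conj2.
have tg0 : tg != 0.
  apply: contraNneq hmum1; rewrite /tg => /eqP; rewrite mulf_eq0 invr_eq0 (negbTE h2) orbF.
  by rewrite addrC addr_eq0.
have th0 : th != 0.
  apply: contraNneq hmu1; rewrite /th => /eqP; rewrite mulf_eq0 invr_eq0 (negbTE h2) orbF.
  by rewrite subr_eq0 eq_sym.
have e1 : 1 - tg = th by rewrite /tg /th; fieldt.
have e2 : 1 - th = tg by rewrite /tg /th; fieldt.
pose g := circle1 q (tg * z0) ((1 - tg) ^+ 2 * a).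
pose h := circle1 q (th * z0) ((1 - th) ^+ 2 * a).
have gA : g :&: Bc q a = [set Some z0].
  by rewrite -[z0 in [set Some z0]]mul1r; apply: meet1 => //; [exact: conj1 | rewrite !mul1r].
have hA : h :&: Bc q a = [set Some z0].
  by rewrite -[z0 in [set Some z0]]mul1r; apply: meet1 => //; [exact: conj1 | rewrite !mul1r].
have gB : g :&: Bc q b = [set Some (mu * z0)].
  by apply: meet1 => //; rewrite e1 /th /tg; fieldt.
have hB : h :&: Bc q b = [set Some (- mu * z0)].
  apply: meet1 => //; first by rewrite conjN // cmu.
    by rewrite mulrNN.
  by rewrite e2 /th /tg; fieldt.
have circ t : conjq q t = t -> 1 - t != 0 ->
    is_circle q (circle1 q (t * z0) ((1 - t) ^+ 2 * a)).
  move=> ct t1; left; exists (t * z0), ((1 - t) ^+ 2 * a); split => //.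
    by rewrite inGFqE expr2 !conjM conjB // conj1 ct ca.
  by rewrite mulf_neq0 // expf_neq0.
exists g, h; split.
- apply/negP => /eqP ghe; move: gB; rewrite ghe hB => /set1_inj [] e.
  have : (2 : L) * (mu * z0) = 0.
    have -> : (2 : L) * (mu * z0) = mu * z0 - - mu * z0 by ring.
    by rewrite e subrr.
  by move/eqP; rewrite !mulf_eq0 (negbTE h2) (negbTE mu0) (negbTE z0n).
- split; split.
  + by apply: circ => //; rewrite e1.
  + by exists (Some z0).
  + by exists (Some (mu * z0)).
  + by apply: circ => //; rewrite e2.
  + by exists (Some z0).
  + by exists (Some (- mu * z0)).
- by [].
- move=> k [kc _ [Q kQ]] kA.
  have [k0 _ kuA] := @tang_elim _ _ _ _ kA.
  have [Qk QB kuB] := @tang_elim _ _ _ _ kQ.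
  clear kQ; case: Q Qk QB kuB => [z|]; last by rewrite mem_BcN.
  move=> Qk QB kuB; move: QB; rewrite mem_Bc => /eqP hzb.
  have hzb' : z * conjq q z = mu * mu * a by rewrite hzb hb'.
  case: kc => [[s [c [cc c0 ek]]] | [s [c [s0 cc ek]]]]; subst k.
  + rewrite mem_c1 in k0; rewrite mem_c1 in Qk.
    have s0 : s != 0.
      apply/eqP => es; move: k0; rewrite es subr0 => k0.
      have := kuA (Some (- z0)); rewrite mem_c1 mem_Bc es subr0 conjN // mulrNN k0 hz0 eqxx.
      move=> /(_ isT isT) [] e.
      have : (2 : L) * z0 = 0.
        have -> : (2 : L) * z0 = z0 - - z0 by ring.
        by rewrite e subrr.
      by move/eqP; rewrite !mulf_eq0 (negbTE h2) (negbTE z0n).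
    have cs0 : conjq q s != 0.
      by apply: contraNneq s0 => e; rewrite -[s]hK e conj0.
    have := kuA (Some (s * conjq q z0 / conjq q s)); rewrite mem_c1 mem_Bc.
    rewrite conjB // conjdiv !conjM !hK.
    have -> : (s * conjq q z0 / conjq q s - s) * (conjq q s * z0 / s - conjq q s)
        = (z0 - s) * (conjq q z0 - conjq q s) by fieldt.
    have -> : s * conjq q z0 / conjq q s * (conjq q s * z0 / s) = z0 * conjq q z0 by fieldt.
    rewrite -conjB // k0 hz0 eqxx => /(_ isT isT) [] e.
    have hs : s * conjq q z0 = z0 * conjq q s by rewrite -{2}e divfK.
    have [ct est] := @tau_lemma _ _ hD hK _ _ _ hz0 ha0 hs.
    move: (s * conjq q z0 / a) ct est => t ct est; subst s.
    have hc : c = (1 - t) ^+ 2 * a.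
      by move/eqP: k0; rewrite conjB // conjM ct => <-; rewrite -hz0; ring.
    move/eqP: Qk; rewrite conjB // conjM ct => Qk.
    have := kuB (Some (z0 * conjq q z / conjq q z0)); rewrite mem_c1 mem_Bc.
    rewrite conjB // conjdiv !conjM !hK ct.
    have -> : (z0 * conjq q z / conjq q z0 - t * z0) * (conjq q z0 * z / z0 - t * conjq q z0)
        = (z - t * z0) * (conjq q z - t * conjq q z0) by fieldt.
    have -> : z0 * conjq q z / conjq q z0 * (conjq q z0 * z / z0) = z * conjq q z by fieldt.
    rewrite Qk hzb !eqxx => /(_ isT isT) [] e3.
    have hs2 : z0 * conjq q z = z * conjq q z0 by rewrite -{2}e3 divfK.
    have [ez|ez] := @sigma_fix _ _ hD hK _ _ _ _ hz0 ha0 hzb' hs2.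
    * left; rewrite /g hc.
      have tt : t = tg.
        apply: solve_t => //; apply: (mulIf ha0).
        rewrite -[(1 - t) * (1 - t) * a]/((1 - t) ^+ 2 * a) -hc -Qk ez conjM cmu -hz0; ring.
      by rewrite tt.
    * right; rewrite /h hc.
      have tt : t = th.
        apply: solve_t; last by [].
          apply: (mulIf ha0).
          rewrite -[(1 - t) * (1 - t) * a]/((1 - t) ^+ 2 * a) -hc -Qk ez conjM conjN // cmu -hz0.
          ring.
        by apply: contraNneq hmum1 => e'; rewrite -[mu]opprK e'.
      by rewrite tt.
  + rewrite mem_c2 in k0; rewrite mem_c2 in Qk.
    have cs0 : conjq q s != 0.
      by apply: contraNneq s0 => e; rewrite -[s]hK e conj0.
    have := kuA (Some (s * conjq q z0 / conjq q s)); rewrite mem_c2 mem_Bc.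
    rewrite conjdiv !conjM !hK.
    have -> : conjq q s * (s * conjq q z0 / conjq q s) + s * (conjq q s * z0 / s)
        = conjq q s * z0 + s * conjq q z0 by fieldt.
    have -> : s * conjq q z0 / conjq q s * (conjq q s * z0 / s) = z0 * conjq q z0 by fieldt.
    rewrite k0 hz0 eqxx => /(_ isT isT) [] e.
    have hs : s * conjq q z0 = z0 * conjq q s by rewrite -{2}e divfK.
    have [ct est] := @tau_lemma _ _ hD hK _ _ _ hz0 ha0 hs.
    move: (s * conjq q z0 / a) ct est => t ct est; subst s.
    have t0 : t != 0 by apply: contraNneq s0 => ->; rewrite mul0r.
    have hc : c = t * a + t * a.
      by move/eqP: k0; rewrite conjM ct => <-; rewrite -hz0; ring.
    move/eqP: Qk; rewrite conjM ct => Qk.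
    have := kuB (Some (z0 * conjq q z / conjq q z0)); rewrite mem_c2 mem_Bc.
    rewrite conjdiv !conjM !hK ct.
    have -> : t * conjq q z0 * (z0 * conjq q z / conjq q z0) + t * z0 * (conjq q z0 * z / z0)
        = t * conjq q z0 * z + t * z0 * conjq q z by fieldt.
    have -> : z0 * conjq q z / conjq q z0 * (conjq q z0 * z / z0) = z * conjq q z by fieldt.
    rewrite Qk hzb !eqxx => /(_ isT isT) [] e3.
    have hs2 : z0 * conjq q z = z * conjq q z0 by rewrite -{2}e3 divfK.
    have ta0 : t * a + t * a != 0.
      have -> : t * a + t * a = 2 * (t * a) by ring.
      by rewrite !mulf_neq0.
    have [ez|ez] := @sigma_fix _ _ hD hK _ _ _ _ hz0 ha0 hzb' hs2.
    * exfalso; move/negP: hmu1; apply; apply/eqP; apply: (mulIf ta0).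
      by rewrite mul1r -{2}hc -Qk ez conjM cmu -hz0; ring.
    * exfalso; move/negP: hmum1; apply; apply/eqP.
      rewrite -[mu]opprK; congr (- _); apply: (mulIf ta0).
      by rewrite mul1r -{2}hc -Qk ez conjM conjN // cmu -hz0; ring.
- by [].
Qed.

Lemma setup (p m : nat) (L : finFieldType)
  (hp : prime p) (hodd : odd p) (hm : (0 < m)%N)
  (hL : #|L| = ((p ^ m) ^ 2)%N) :
  [/\ (forall x y : L, conjq (p^m) (x + y) = conjq (p^m) x + conjq (p^m) y),
      (forall x : L, conjq (p^m) (conjq (p^m) x) = x) & (2%:R : L) != 0].
Proof.
have pc : p \in [pchar L] by apply: (card_finPcharP (n := (m*2)%N)) => //; rewrite hL expnM.
split.
- move=> x y; rewrite /conjq exprDn_pchar // (eq_pnat _ (pcharf_eq pc)).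
  by rewrite pnatX pnat_id.
- by move=> x; rewrite /conjq -exprM mulnn -hL expf_card.
- rewrite -(dvdn_pcharf pc) dvdn_prime2 //; apply/negP => /eqP H.
  by move: hodd; rewrite H.
Qed.

Theorem mainTheorem5 (p m : nat) (L : finFieldType)
  (hp : prime p) (hodd : odd p) (hm : (0 < m)%N)
  (hL : #|L| = ((p ^ m) ^ 2)%N)
  (a b mu : L)
  (ha : inGFq (p ^ m) a) (ha0 : a != 0)
  (hb : inGFq (p ^ m) b) (hb0 : b != 0)
  (hmu : inGFq (p ^ m) mu) (hmu2 : mu ^+ 2 = b / a) (hba : b / a != 1)
  (P : option L) (hP : P \in Bc (p ^ m) a) :
  exists g h : {set option L},
    [/\ g != h,
        in_tau (p ^ m) a b g /\ in_tau (p ^ m) a b h,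
        tangential_in g (Bc (p ^ m) a) P /\ tangential_in h (Bc (p ^ m) a) P,
        (forall k, in_tau (p ^ m) a b k -> tangential_in k (Bc (p ^ m) a) P ->
                   k = g \/ k = h)
      & tangential_in g (Bc (p ^ m) b) (scalept mu P) /\
        tangential_in h (Bc (p ^ m) b) (scalept (- mu) P)].
Proof.
have [hD hK h2] := @setup p m L hp hodd hm hL.
exact: main_abs.
Qed.
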